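(* Let $n$ be an even integer, $Q=P^{\alpha_2}$, $w^{ss}_{\min}\in W^Q$ the element corresponding to $(\frac n2,n)$, $\xi\in X(w^{ss}_{\min})^{ss}_T(\mathcal{L}(\frac n2\omega_2))$, and $\varphi:(G_{2,n})^{ss}_T(\mathcal{L}(\frac n2\omega_2))\to T\backslash\backslash(G_{2,n})^{ss}_T(\mathcal{L}(\frac n2\omega_2))$ the GIT quotient map. If $u,v\in W^{P^{\alpha_{n/2}}}$ satisfy $\varphi(u\xi)=\varphi(v\xi)$, then $v=u$ or $v=uw_0^{S\setminus\{\alpha_{n/2}\}}$.
   Context: $G=SL(n,\mathbb{C})$, $T$ the diagonal torus, $B$ the upper triangular Borel subgroup, $W=S_n$ acting on $G/Q$ via permutation-matrix representatives (so $\varphi(u\xi)$ is independent of the representative). $G_{2,n}=G/Q$ the Grassmannian of 2-planes in $\mathbb{C}^n$, $X(u)=\overline{BuQ}/Q$ for $u\in W^Q\cong I(2,n)$. $\mathcal{L}(m\omega_2)=\mathcal{O}(m)$ for the Plücker embedding with natural $T$-linearization; $ss$ denotes $T$-semistable points; the quotient is $\mathrm{Proj}\bigoplus_dH^0(G_{2,n},\mathcal{L}(\frac n2\omega_2)^{\otimes d})^T$. $W^{P^{\alpha_{n/2}}}=\{v\in S_n:v(1)<\cdots<v(\frac n2),\ v(\frac n2+1)<\cdots<v(n)\}$, with longest element $w_0^{S\setminus\{\alpha_{n/2}\}}$: $i\mapsto\frac n2+i$, $\frac n2+i\mapsto i$. *)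

(* Defs.v *)
From HB Require Import structures.
From mathcomp Require Import all_boot all_order all_algebra all_fingroup.
From mathcomp Require Import Rstruct complex.
Set Implicit Arguments.
Unset Strict Implicit.
Unset Printing Implicit Defensive.
Import Order.TTheory GRing.Theory Num.Theory.
Local Open Scope ring_scope.

Notation CC := (complex Rdefinitions.R).

(* Points of the Grassmannian G_{2,n}: a 2-plane V in C^n is represented by a
   2 x n matrix A of rank 2 whose rows span V (vectors of C^n are written as
   row vectors).  All predicates below are invariant under the left action
   of GL_2 on A, i.e. depend only on the plane.                             *)
Definition gr_point (n : nat) (A : 'M[CC]_(2, n)) : Prop := \rank A = 2%N.

(* Action of g in GL_n on the plane spanned by the rows of A: g.V = {g v}. *)
Definition gact (n : nat) (g : 'M[CC]_n) (A : 'M[CC]_(2, n)) : 'M[CC]_(2, n) :=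
  A *m g^T.

(* Action of a Weyl group element w in S_n, via the permutation matrix
   e_i |-> e_{w i}.  (perm_mx w)^T is that matrix, so w.A = A *m perm_mx w;
   equivalently the (k, w i) entry of w.A is the (k, i) entry of A. *)
Definition wact (n : nat) (w : 'S_n) (A : 'M[CC]_(2, n)) : 'M[CC]_(2, n) :=
  gact (perm_mx w)^T A.

(* Plücker coordinates p_{ij} = e_i^* /\ e_j^* (a1 /\ a2) of the plane
   spanned by the rows a1, a2 of A (all ordered pairs (i,j); p_ii = 0 and
   p_ji = - p_ij, so polynomials in these are exactly polynomials in the
   standard Plücker coordinates). *)
Definition plucker (n : nat) (A : 'M[CC]_(2, n)) (i j : 'I_n) : CC :=
  A 0 i * A 1 j - A 0 j * A 1 i.

Definition ppoly (n : nat) := seq (CC * {ffun 'I_n * 'I_n -> nat}).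

Definition ppoly_eval (n : nat) (f : ppoly n) (p : 'I_n -> 'I_n -> CC) : CC :=
  \sum_(m <- f) m.1 * \prod_(ij : 'I_n * 'I_n) p ij.1 ij.2 ^+ m.2 ij.

Definition homog (n : nat) (k : nat) (f : ppoly n) : Prop :=
  forall m, m \in f -> (\sum_(ij : 'I_n * 'I_n) m.2 ij)%N = k.

(* Value of f on the (affine cone point over the) plane A. *)
Definition pval (n : nat) (f : ppoly n) (A : 'M[CC]_(2, n)) : CC :=
  ppoly_eval f (plucker A).

(* The maximal torus T of SL(n,C): diagonal matrices with determinant 1. *)
Definition torus_elt (n : nat) (t : 'I_n -> CC) : Prop := \prod_i t i = 1.
Definition tact (n : nat) (t : 'I_n -> CC) (A : 'M[CC]_(2, n)) : 'M[CC]_(2, n) :=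
  gact (diag_mx (\row_i t i)) A.

(* The Borel subgroup B of SL(n,C): upper triangular, determinant 1. *)
Definition borel_elt (n : nat) (b : 'M[CC]_n) : Prop :=
  (forall i j : 'I_n, (j < i)%N -> b i j = 0) /\ \det b = 1.

(* A subvariety Y of G_{2,n} is a predicate on representing matrices.
   A T-invariant section of L(k omega_2) = O(k) on Y: a homogeneous form of
   degree k in the Plücker coordinates (= section of O(k) on the cone over
   Y) whose value on the cone over Y is invariant under T (with the natural
   linearization). *)
Definition Tinv_section (n : nat) (Y : 'M[CC]_(2, n) -> Prop) (k : nat)
    (f : ppoly n) : Prop :=
  homog k f /\
  forall t A, torus_elt t -> gr_point A -> Y A -> pval f (tact t A) = pval f A.

Definition whole_grass (n : nat) (A : 'M[CC]_(2, n)) : Prop := True.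

(* Y^{ss}_T(L(k omega_2)): points of Y at which some T-invariant section of
   L(k omega_2)^{d} on Y, d > 0, does not vanish. *)
Definition semistable (n : nat) (Y : 'M[CC]_(2, n) -> Prop) (k : nat)
    (A : 'M[CC]_(2, n)) : Prop :=
  gr_point A /\ Y A /\
  exists d f, (0 < d)%N /\ Tinv_section Y (d * k) f /\ pval f A != 0.

(* The GIT quotient map phi : (G_{2,n})^ss_T(L(k omega_2)) -> Proj R,
   R = \bigoplus_d H^0(G_{2,n}, L(k omega_2)^d)^T, sends x to the homogeneous
   prime of R consisting of the invariants vanishing at x.  Hence
   phi x = phi y  iff  every homogeneous T-invariant section vanishes at x
   exactly when it vanishes at y. *)
Definition same_quotient_image (n : nat) (k : nat) (A A' : 'M[CC]_(2, n)) : Prop :=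
  forall d f, Tinv_section (@whole_grass n) (d * k) f ->
    (pval f A = 0 <-> pval f A' = 0).

(* X(u) = Zariski closure of B.uQ in G_{2,n}
   (subset of P(wedge^2 C^n) via Plücker), i.e. the common zero locus in
   G_{2,n} of all homogeneous forms vanishing on the orbit B.(uQ).  Here the
   T-fixed point uQ, u in W^Q <-> (a,b) in I(2,n), is span(e_a, e_b), given by
   the matrix pt A0. *)
Definition schubert (n : nat) (A0 : 'M[CC]_(2, n)) (A : 'M[CC]_(2, n)) : Prop :=
  gr_point A /\
  forall k (f : ppoly n), homog k f ->
    (forall b, borel_elt b -> pval f (gact b A0) = 0) -> pval f A = 0.

(* The T-fixed point e_a /\ e_b (0-indexed a, b). *)
Definition fixed_pt (n a b : nat) : 'M[CC]_(2, n) :=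
  \matrix_(r < 2, j < n) (if r == 0 then (j == a :> nat)%:R else (j == b :> nat)%:R).

(* w^{ss}_min in W^Q corresponds to (n/2, n) (1-indexed), i.e. the point
   span(e_{n/2}, e_n); 0-indexed: (n/2 - 1, n - 1). *)
Definition X_wssmin (n : nat) : 'M[CC]_(2, n) -> Prop :=
  schubert (fixed_pt n (n./2).-1 n.-1).

(* W^{P^{alpha_{n/2}}}: permutations increasing on {1..n/2} and on
   {n/2+1..n} (0-indexed: on [0, n/2) and on [n/2, n)). *)
Definition in_WP_half (n : nat) (u : 'S_n) : Prop :=
  forall i j : 'I_n, (i < j)%N ->
    ((j < n./2)%N || (n./2 <= i)%N) -> (u i < u j)%N.

(* v = u * w_0^{S \ alpha_{n/2}} as permutations (v x = u (w_0 x)), where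
   w_0^{S\alpha_{n/2}} : i |-> n/2 + i, n/2 + i |-> i. *)
Definition is_times_w0half (n : nat) (u v : 'S_n) : Prop :=
  forall x y : 'I_n, (y : nat) = (x + n./2)%N -> v x = u y /\ v y = u x.

(* Main.v *)
Require Import Defs.
From mathcomp Require Import all_boot all_order all_algebra all_fingroup.
From mathcomp Require Import Rstruct complex.
From mathcomp Require Import ring zify.
Set Implicit Arguments.
Unset Strict Implicit.
Unset Printing Implicit Defensive.
Import Order.TTheory GRing.Theory Num.Theory.
Local Open Scope ring_scope.

Lemma plucker_tact n (t : 'I_n -> CC) A i j :
  plucker (tact t A) i j = t i * t j * plucker A i j.
Proof.
rewrite /plucker /tact /Defs.gact tr_diag_mx mul_mx_diag !mxE.
ring.
Qed.

Lemma plucker_wact n (w : 'S_n) A i j :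
  plucker (wact w A) (w i) (w j) = plucker A i j.
Proof.
have E : forall k l, (wact w A) k (w l) = A k l.
  move=> k l; rewrite /wact /Defs.gact trmxK /perm_mx mxE.
  rewrite (bigD1 l) //= big1 ?addr0.
    by rewrite /row_perm !mxE eqxx mulr1.
  by move=> m /negPf ml; rewrite /row_perm !mxE (inj_eq perm_inj) ml mulr0.
by rewrite /plucker !E.
Qed.

Lemma plucker_anti n (A : 'M[CC]_(2,n)) i j : plucker A j i = - plucker A i j.
Proof. rewrite /plucker; ring. Qed.

Lemma plucker_diag n (A : 'M[CC]_(2,n)) i : plucker A i i = 0.
Proof. rewrite /plucker; ring. Qed.

Definition mon n (I : finType) (P : pred I) (g : I -> 'I_n * 'I_n) : ppoly n :=
  [:: (1, [ffun ab => #|[pred x | P x && (g x == ab)]| ])].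

Lemma pval_mon n (I : finType) (P : pred I) (g : I -> 'I_n * 'I_n) A :
  Defs.pval (mon P g) A = \prod_(x | P x) plucker A (g x).1 (g x).2.
Proof.
rewrite /Defs.pval /ppoly_eval /mon big_seq1 /= mul1r.
rewrite (partition_big g xpredT) //=.
apply: eq_bigr => ab _; rewrite ffunE.
rewrite (eq_bigr (fun _ => plucker A ab.1 ab.2)); last by move=> x /andP[_ /eqP ->].
by rewrite -prodr_const.
Qed.

Lemma homog_mon n (I : finType) (P : pred I) (g : I -> 'I_n * 'I_n) :
  homog #|P| (mon P g).
Proof.
move=> m; rewrite inE => /eqP -> /=.
rewrite -sum1_card (partition_big g xpredT) //=.
by apply: eq_bigr => ab _; rewrite ffunE sum1_card.
Qed.

Lemma poly_zero_nz (p : {poly CC}) : (forall s, s != 0 -> p.[s] = 0) -> p = 0.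
Proof.
move=> H; apply/eqP; apply: contraT => pn0.
have := max_poly_roots pn0 (rs := mkseq (fun i => (i.+1)%:R) (size p)).
rewrite size_mkseq ltnn; apply => //.
  apply/allP => x /mapP [i _ ->]; apply/rootP/H.
  by rewrite pnatr_eq0.
rewrite map_inj_uniq ?iota_uniq // => i j /eqP; rewrite eqr_nat eqSS.
by move/eqP.
Qed.

Lemma card_lo n h : (h <= n)%N -> #|[pred i : 'I_n | (i < h)%N]| = h.
Proof.
move=> hn.
have inj : injective (@widen_ord h n hn).
  by move=> a b /(f_equal val) /= /val_inj.
rewrite -{2}(card_ord h) -cardsT -(card_imset _ inj).
apply: eq_card => i; rewrite !inE; apply/idP/imsetP.
  by move=> ih; exists (Ordinal ih) => //; apply: val_inj.
by move=> [j _ ->] /=.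
Qed.


Lemma prod_exprz (I : finType) (s : CC) (F : I -> int) :
  s \is a GRing.unit -> \prod_i s ^ F i = s ^ (\sum_i F i).
Proof.
move=> us.
apply: (big_ind2 (fun a b => a = s ^ b)) => //.

by move=> a1 a2 b1 b2 -> ->; rewrite exprzDr.
Qed.

Lemma destab n (A : 'M[CC]_(2,n)) (f : ppoly n) D (w : 'I_n -> int) :
  (0 < D)%N -> homog D f ->
  (forall t, torus_elt t -> Defs.pval f (tact t A) = Defs.pval f A) ->
  \sum_i w i = 0 ->
  (forall i j, plucker A i j != 0 -> 0 < w i + w j) ->
  Defs.pval f A = 0.
Proof.
move=> D0 HD Hinv Hw Hpos.
pose q := plucker A.
pose e (ij : 'I_n * 'I_n) := absz (w ij.1 + w ij.2).
pose P : {poly CC} := \sum_(m <- f) m.1%:P *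
   \prod_(ij : 'I_n * 'I_n) (q ij.1 ij.2 *: 'X^(e ij)) ^+ m.2 ij.
have Ps : forall s, s != 0 -> P.[s] = Defs.pval f A.
  move=> s s0; have us : s \is a GRing.unit by rewrite unitfE.
  rewrite -(Hinv (fun i => s ^ w i)); last first.
    by rewrite /torus_elt prod_exprz // Hw expr0z.
  rewrite /Defs.pval /ppoly_eval horner_sum; apply: eq_bigr => m _.
  rewrite hornerM hornerC horner_prod; congr (_ * _); apply: eq_bigr => ij _.
  rewrite horner_exp hornerZ hornerXn plucker_tact; congr (_ ^+ _).
  rewrite /q; case: (eqVneq (plucker A ij.1 ij.2) 0) => [->|qn0]; first by rewrite mulr0 mul0r.
  rewrite -exprzDr // -(gez0_abs (ltW (Hpos _ _ qn0))) mulrC.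
  by [].
have P0 : P.[0] = 0.
  rewrite horner_sum big_seq big1 // => m mf.
  rewrite hornerM horner_prod.
  have [ij mij] : exists ij, (0 < m.2 ij)%N.
    have := HD m mf.
    case: (pickP (fun ij => 0 < m.2 ij)%N) => [ij Hij _|H0]; first by exists ij.
    rewrite big1 => [E|ij _]; first by move: D0; rewrite -E.
    by move/negbT: (H0 ij); rewrite lt0n negbK => /eqP.
  rewrite (bigD1 ij) //= horner_exp hornerZ hornerXn.
  case: (eqVneq (q ij.1 ij.2) 0) => [->|qn0].
    by rewrite mul0r expr0n (gtn_eqF mij) mul0r mulr0.
  have ep : (0 < e ij)%N by rewrite /e absz_gt0 gt_eqF // Hpos.
  by rewrite expr0n (gtn_eqF ep) mulr0 expr0n (gtn_eqF mij) mul0r mulr0.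
have : P = (Defs.pval f A)%:P.
  apply/eqP; rewrite -subr_eq0; apply/eqP/poly_zero_nz => s s0.
  by rewrite hornerD hornerN hornerC Ps // subrr.
by move/(congr1 (horner^~ 0)); rewrite P0 hornerC.
Qed.


Lemma sum_ind (I : finType) (P : pred I) : (\sum_i (P i : nat))%N = #|P|.
Proof.
rewrite -sum1_card [RHS]big_mkcond /=; apply: eq_bigr => i _.
by rewrite unfold_in; case: (P i).
Qed.

Lemma sum_w3 n h (c : 'I_n) (a b g : int) : (h <= n)%N ->
  \sum_(i : 'I_n) (a * ((i < h)%N : nat)%:R + b * ((i == c) : nat)%:R + g)
  = a * h%:R + b + g * n%:R.
Proof.
move=> hn.
rewrite !big_split /= -!mulr_sumr -!natr_sum sum_ind card_lo //.
rewrite sum_ind (eq_card1 (x:=c)) ?mulr1; last by move=> i; rewrite !inE.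
by rewrite big_const_ord iter_addr_0 !mulr_natr.
Qed.

Lemma plucker_id n (A : 'M[CC]_(2,n)) a b c k :
  plucker A a b * A k c = plucker A c b * A k a + plucker A a c * A k b.
Proof.
rewrite /plucker; case: k => [[|[|k]]] // Hk.
- have -> : Ordinal Hk = 0 by apply: val_inj.
  ring.
- have -> : Ordinal Hk = 1 by apply: val_inj.
  ring.
Qed.

Lemma schub_zero n xi : (0 < n./2)%N -> schubert (fixed_pt n (n./2).-1 n.-1) xi ->
  forall i j : 'I_n, (n./2 <= i)%N -> (n./2 <= j)%N -> plucker xi i j = 0.
Proof.
move=> h0 [_ H] i j hi hj.
have := H _ _ (@homog_mon n _ (pred1 i) (fun _ : 'I_n => (i, j))).
rewrite !pval_mon !big_pred1_eq /=; apply => b [bb _].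
rewrite pval_mon big_pred1_eq /=.
have E : forall l : 'I_n, (n./2 <= l)%N -> (Defs.gact b (fixed_pt n (n./2).-1 n.-1)) 0 l = 0.
  move=> l hl; rewrite /Defs.gact mxE; apply: big1 => m _.
  rewrite /fixed_pt !mxE /=.
  case: eqP => [em|]; last by rewrite mul0r.
  rewrite bb ?mulr0 // em; move: h0 hl; set h := n./2; lia.
by rewrite /plucker !E // !mul0r subr0.
Qed.


Lemma half_facts n : ~~ odd n -> (0 < n)%N -> n = (n./2 + n./2)%N /\ (0 < n./2)%N.
Proof.
move=> ev n0; have := odd_double_half n; rewrite (negPf ev) add0n -addnn => E.
split; first exact: esym E.
move: n0 E; set h := n./2; lia.
Qed.

Lemma ss_nz n xi : ~~ odd n -> (0 < n)%N -> semistable (@X_wssmin n) n./2 xi ->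
  forall i j : 'I_n, (i < n./2)%N -> (n./2 <= j)%N -> plucker xi i j != 0.
Proof.
move=> ev n0 [gp [Y [d [f [d0 [[hom inv] fnz]]]]]] i0 j0 hi hj.
have [nE h0] := half_facts ev n0.
have SZ := schub_zero h0 Y.
move: hom hi hj SZ nE h0; set h := n./2 => hom hi hj SZ nE h0.
have hn : (h <= n)%N by rewrite nE leq_addr.
apply/negP => /eqP q0; move/negP: fnz; apply; apply/eqP.
have Hinv : forall t, torus_elt t -> Defs.pval f (tact t xi) = Defs.pval f xi.
  by move=> t ht; apply: inv.
have D0 : (0 < d * h)%N by rewrite muln_gt0 d0 h0.
case: (boolP [forall k, xi k j0 == 0]) => [/forallP cz | ].
  apply: (destab (w := fun i : 'I_n => 1 * ((i < h)%N : nat)%:R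
           + (- h%:R) * ((i == j0) : nat)%:R + 0) D0 hom Hinv).
    by rewrite sum_w3 // mul1r mul0r addr0 subrr.
  move=> a b qn0.
  have aj : a != j0.
    apply: contraNneq qn0 => ->.
    by rewrite /plucker (eqP (cz 0)) (eqP (cz 1)) mul0r mulr0 subrr.
  have bj : b != j0.
    apply: contraNneq qn0 => ->.
    by rewrite /plucker (eqP (cz 0)) (eqP (cz 1)) mul0r mulr0 subrr.
  rewrite (negPf aj) (negPf bj) /= !mulr0 !addr0 !mul1r.
  case: (ltnP a h) => ha; case: (ltnP b h) => hb /=; try lia.
  by move: qn0; rewrite SZ ?eqxx.
move=> /forallPn [k nz].
have Kj : forall a : 'I_n, (h <= a)%N \/ a = i0 -> plucker xi a j0 = 0.
  by move=> a [ha|->] //; apply: SZ.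
have K0 : forall a b : 'I_n, (h <= a)%N \/ a = i0 -> (h <= b)%N \/ b = i0 ->
    plucker xi a b = 0.
  move=> a b Ha Hb; have := plucker_id xi a b j0 k.
  rewrite (plucker_anti xi b j0) (Kj b Hb) (Kj a Ha) oppr0 !mul0r addr0 => /eqP.
  by rewrite mulf_eq0 (negPf nz) orbF => /eqP.
apply: (destab (w := fun i : 'I_n => (2 * h%:R) * ((i < h)%N : nat)%:R
         + (- (2 * h%:R)) * ((i == i0) : nat)%:R + (1 - h%:R)) D0 hom Hinv).
  by rewrite sum_w3 // nE; lia.
move=> a b qn0.
have wv : forall x : 'I_n, (2 * h%:R) * ((x < h)%N : nat)%:R
         + (- (2 * h%:R)) * ((x == i0) : nat)%:R + (1 - h%:R)
         = if (x < h)%N && (x != i0) then h%:R + 1 else 1 - h%:R :> int.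
  move=> x; case: (eqVneq x i0) => [->|nx]; first by rewrite hi /=; lia.
  by rewrite andbT /=; case: (ltnP x h) => /= _; lia.
rewrite !wv.
have : ((a < h)%N && (a != i0)) || ((b < h)%N && (b != i0)).
  apply: contraNT qn0; rewrite negb_or !negb_and -!leqNgt !negbK => /andP [Ha Hb].
  apply/eqP/K0.
    by case/orP: Ha => [Ha|/eqP Ha]; [left|right].
  by case/orP: Hb => [Hb|/eqP Hb]; [left|right].
by case: ((a < h)%N && (a != i0)); case: ((b < h)%N && (b != i0)) => //= _; lia.
Qed.


Lemma perm_stable n (s : 'S_n) (P : pred 'I_n) :
  (forall i, P i -> P (s i)) -> forall i, P (s i) -> P i.
Proof.
move=> sP i Psi.
have sub : [set s j | j in P] \subset [set j | P j].
  by apply/subsetP => x /imsetP [j Pj ->]; rewrite inE sP.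
have := subset_cardP _ sub.
rewrite card_imset; last exact: perm_inj.
have -> : #|[set j | P j]| = #|P| by apply: eq_card => x; rewrite inE.
move=> /(_ erefl) /(_ (s i)); rewrite inE Psi => /imsetP [j Pj /perm_inj ->].
exact: Pj.
Qed.

Lemma incr_eq n (P : pred 'I_n) (f g : 'I_n -> 'I_n) :
  (forall i j, P i -> P j -> (i < j)%N -> (f i < f j)%N) ->
  (forall i j, P i -> P j -> (i < j)%N -> (g i < g j)%N) ->
  (forall i, P i -> exists2 j, P j & f i = g j) ->
  (forall i, P i -> exists2 j, P j & g i = f j) ->
  forall i, P i -> f i = g i.
Proof.
move=> If Ig Sf Sg.
suff H : forall m i, val i = m -> P i -> f i = g i by move=> i; apply: H.
elim/ltn_ind => m IH i im Pi.
have le1 : (g i <= f i)%N.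
  have [j Pj fj] := Sf i Pi.
  case: (ltnP j i) => ji.
    have fgj := IH j (ltac:(by rewrite -im)) j erefl Pj.
    have := If j i Pj Pi ji; rewrite fgj -fj ltnn //.
  rewrite fj; move: ji; rewrite leq_eqVlt => /orP [/eqP /val_inj ->|ij] //.
  exact: ltnW (Ig i j Pi Pj ij).
have le2 : (f i <= g i)%N.
  have [j Pj gj] := Sg i Pi.
  case: (ltnP j i) => ji.
    have fgj := IH j (ltac:(by rewrite -im)) j erefl Pj.
    have := Ig j i Pj Pi ji; rewrite -fgj -gj ltnn //.
  rewrite gj; move: ji; rewrite leq_eqVlt => /orP [/eqP /val_inj ->|ij] //.
  exact: ltnW (If i j Pi Pj ij).
by apply: val_inj; apply/eqP; rewrite eqn_leq le1 le2.
Qed.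

Lemma perm_half n (P : pred 'I_n) (u v : 'S_n) :
  (forall i j, P i -> P j -> (i < j)%N -> (u i < u j)%N) ->
  (forall i j, P i -> P j -> (i < j)%N -> (v i < v j)%N) ->
  (forall i, P i -> P ((v^-1)%g (u i))) ->
  forall i, P i -> u i = v i.
Proof.
move=> Iu Iv S.
have S' : forall i, P i -> P ((u * v^-1)%g i) by move=> i Pi; rewrite permM S.
apply: incr_eq => // i Pi.
  by exists ((v^-1)%g (u i)); [apply: S | rewrite permKV].
exists ((u^-1)%g (v i)); last by rewrite permKV.
apply: (perm_stable S'); rewrite permM permKV permK //.
Qed.

Lemma halves_eq n h (u v : 'S_n) :
  (forall i j : 'I_n, (i < j)%N -> ((j < h)%N || (h <= i)%N) -> (u i < u j)%N) ->
  (forall i j : 'I_n, (i < j)%N -> ((j < h)%N || (h <= i)%N) -> (v i < v j)%N) ->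
  (forall i : 'I_n, (i < h)%N -> ((v^-1)%g (u i) < h)%N) -> u = v.
Proof.
move=> Iu Iv S; apply/permP => i.
case: (ltnP i h) => hi.
  apply: (@perm_half n [pred x : 'I_n | (x < h)%N]) => //= a b ha hb ab.
    by apply: Iu; rewrite ?hb.
  by apply: Iv; rewrite ?hb.
have SH : forall x : 'I_n, (h <= x)%N -> (h <= (v^-1)%g (u x))%N.
  move=> x hx; rewrite leqNgt; apply/negP => hs.
  have S' : forall y : 'I_n, (y < h)%N -> (((u * v^-1)%g y) < h)%N.
    by move=> y hy; rewrite permM S.
  have := @perm_stable n (u * v^-1)%g [pred y : 'I_n | (y < h)%N] S' x.
  by rewrite /= permM => /(_ hs); rewrite ltnNge hx.
apply: (@perm_half n [pred x : 'I_n | (h <= x)%N]) => //= a b ha hb ab.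
  by apply: Iu => //; rewrite ha orbT.
by apply: Iv => //; rewrite ha orbT.
Qed.


Definition swf n h (i : 'I_n) : 'I_n :=
  insubd i (if (i < h)%N then i + h else i - h)%N.

Lemma val_swf n h (i : 'I_n) : n = (h + h)%N ->
  val (swf h i) = if (i < h)%N then (i + h)%N else (i - h)%N.
Proof.
move=> nE; rewrite /swf val_insubd /=; case: ifP => // /negbT.
by have := ltn_ord i; case: (ltnP i h); lia.
Qed.

Lemma swfK n h : n = (h + h)%N -> cancel (@swf n h) (@swf n h).
Proof.
move=> nE i; apply: val_inj; rewrite val_swf // val_swf //.
by have := ltn_ord i; case: (ltnP i h) => hi /=; case: ifP => /=; lia.
Qed.

Theorem lemma7p9 (n : nat) (Hn_even : ~~ odd n) (Hn_pos : (0 < n)%N)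
    (xi : 'M[CC]_(2, n))
    (Hxi : semistable (@X_wssmin n) n./2 xi)
    (u v : 'S_n) (Hu : in_WP_half u) (Hv : in_WP_half v)
    (Huss : semistable (@whole_grass n) n./2 (wact u xi))
    (Hvss : semistable (@whole_grass n) n./2 (wact v xi))
    (Hphi : same_quotient_image n./2 (wact u xi) (wact v xi)) :
  v = u \/ is_times_w0half u v.
Proof.
have [nE h0] := half_facts Hn_even Hn_pos.
have NZ := ss_nz Hn_even Hn_pos Hxi.
have [_ [Y _]] := Hxi.
have SZ := schub_zero h0 Y.
move: (Hu) (Hv) => Hu' Hv'; rewrite /in_WP_half in Hu' Hv'.
rewrite /is_times_w0half.
move: NZ SZ Hu' Hv' Hphi nE h0; set h := n./2 => NZ SZ Hu' Hv' Hphi nE h0.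
pose sw : 'S_n := perm (can_inj (swfK nE)).
have swE : forall i, val (sw i) = if (i < h)%N then (i + h)%N else (i - h)%N.
  by move=> i; rewrite permE val_swf.
case: (boolP [exists a : 'I_n, (h <= a)%N && (h <= (v^-1)%g (u a))%N])
   => [/existsP [a /andP [ha hva]] | /existsPn noA].
  case: (boolP [exists b : 'I_n, (b < h)%N && (h <= (v^-1)%g (u b))%N])
     => [/existsP [b /andP [hb hvb]] | /existsPn noB]; last first.
    left; symmetry; apply: (halves_eq Hu' Hv') => i hi.
    by have := noB i; rewrite hi /= -ltnNge.
  exfalso.
  pose tau := tperm (sw b) a.
  pose rho : 'S_n := (sw * tau)%g.
  have hrho : forall x, (h <= rho x)%N = (x < h)%N.
    move=> x; rewrite permM /tau.
    have swb : (h <= sw b)%N by rewrite swE hb; lia.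
    have -> : (h <= tperm (sw b) a (sw x))%N = (h <= sw x)%N.
      by case: tpermP => [->|->|]; rewrite ?swb ?ha // => ->; rewrite ?swb ?ha.
    by rewrite swE; case: (ltnP x h) => hx; have := ltn_ord x; lia.
  have rhob : rho b = a by rewrite permM /tau tpermL.
  pose g := fun i : 'I_n => (u i, u (rho i)).
  pose F := mon [pred i : 'I_n | (i < h)%N] g.
  have HF : Tinv_section (@whole_grass n) (1 * h) F.
    split.
      have := @homog_mon n _ [pred i : 'I_n | (i < h)%N] g.
      by rewrite card_lo ?mul1n // nE leq_addr.
    move=> t A ht _ _; rewrite !pval_mon.
    rewrite (eq_bigr (fun i => (t (g i).1 * t (g i).2) * plucker A (g i).1 (g i).2));
      last by move=> i _; apply: plucker_tact.
    rewrite big_split /=.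
    suff -> : \prod_(i : 'I_n | (i < h)%N) (t (u i) * t (u (rho i))) = 1 by rewrite mul1r.
    rewrite big_split /=.
    have -> : \prod_(i : 'I_n | (i < h)%N) t (u (rho i)) = \prod_(i : 'I_n | (h <= i)%N) t (u i).
      rewrite [RHS](reindex_inj (perm_inj (s:=rho))) /=.
      by apply: eq_bigl => x; rewrite hrho.
    have -> : \prod_(i : 'I_n | (h <= i)%N) t (u i) = \prod_(i : 'I_n | ~~ (i < h)%N) t (u i).
      by apply: eq_bigl => x; rewrite -leqNgt.
    rewrite -(bigID (fun i : 'I_n => (i < h)%N) xpredT (fun i => t (u i))) /=.
    by rewrite -(reindex_inj (perm_inj (s:=u)) (P:=xpredT) (F:=t)).
  have := Hphi 1%N F HF.
  rewrite !pval_mon.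
  have -> : \prod_(i : 'I_n | (i < h)%N) plucker (wact v xi) (g i).1 (g i).2 = 0.
    rewrite (bigD1 b) //= rhob.
    rewrite -(permKV v (u b)) -(permKV v (u a)) plucker_wact SZ //.
    by rewrite mul0r.
  move=> [_ /(_ erefl) /eqP].
  apply/negP; apply/prodf_neq0 => i /= hi.
  rewrite plucker_wact; apply: NZ => //.
  by rewrite hrho.
right.
have E : (sw * u)%g = v.
  apply: (halves_eq (h:=h)) => //.
    move=> i j ij hij; rewrite !permM; apply: Hu'.
      move: hij; have := ltn_ord j; have := ltn_ord i.
      by rewrite !swE; case: (ltnP i h); case: (ltnP j h) => /=; lia.
    move: hij; have := ltn_ord j; have := ltn_ord i.
    by rewrite !swE; case: (ltnP i h); case: (ltnP j h) => /=; lia.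
  move=> i hi; have := noA (sw i); rewrite permM.
  have -> : (h <= sw i)%N by rewrite swE hi; lia.
  by rewrite /= -ltnNge.
move=> x y exy; rewrite -E !permM.
have xh : (x < h)%N by have := ltn_ord y; lia.
have -> : sw x = y by apply: val_inj; rewrite swE xh /=; lia.
have -> : sw y = x by apply: val_inj; rewrite swE /=; case: (ltnP y h) => H; lia.
by [].
Qed.
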